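(* Let $\Psi$ be a performance metric that satisfies TP/TN monotonicity. Then $\Psi$ satisfies TP monotonicity.
   Context: Labels are binary. For predictions $\mathbf{s}\in\{0,1\}^n$ and labels $\mathbf{y}\in\{0,1\}^n$ let $\widehat{TP}=\frac1n\sum_i s_iy_i$, $\widehat{TN}=\frac1n\sum_i(1-s_i)(1-y_i)$, $v(\mathbf{s})=\frac1n\sum_i s_i$, $p(\mathbf{y})=\frac1n\sum_iy_i$ (assume $0<p<1$), true positive rate $r_p=\widehat{TP}/p$ and true negative rate $r_n=\widehat{TN}/(1-p)$. A metric $\Psi$ of the empirical confusion matrix can be written both as $\Psi=\Phi(\widehat{TP},v,p)$ and as $\Psi=\Gamma(r_p,r_n,p)$ (note $\widehat{TN}=1-v-p+\widehat{TP}$). $\Psi$ is TP monotonic if $u_1>u_2$ with $v,p$ fixed implies $\Phi(u_1,v,p)>\Phi(u_2,v,p)$. $\Psi$ is TP/TN monotonic if $r_{p1}>r_{p2}$ and $r_{n1}>r_{n2}$ with $p$ fixed imply $\Gamma(r_{p1},r_{n1},p)>\Gamma(r_{p2},r_{n2},p)$. *)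

(* Defs.v *)
From mathcomp Require Import all_boot all_order all_algebra.
Set Implicit Arguments. Unset Strict Implicit. Unset Printing Implicit Defensive.
Import Order.TTheory GRing.Theory Num.Theory.
Local Open Scope ring_scope.

Section Empirical.
Variable R : realFieldType.

(* predictions s and labels y on n samples, as functions 'I_n -> bool *)
Definition TPhat (n : nat) (s y : 'I_n -> bool) : R :=
  (\sum_(i < n) ((s i && y i : bool)%:R : R)) / n%:R.
Definition TNhat (n : nat) (s y : 'I_n -> bool) : R :=
  (\sum_(i < n) ((~~ s i && ~~ y i : bool)%:R : R)) / n%:R.
Definition vhat (n : nat) (s : 'I_n -> bool) : R :=
  (\sum_(i < n) ((s i : bool)%:R : R)) / n%:R.
Definition phat (n : nat) (y : 'I_n -> bool) : R :=
  (\sum_(i < n) ((y i : bool)%:R : R)) / n%:R.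
Definition rpos (n : nat) (s y : 'I_n -> bool) : R := TPhat s y / phat y.
Definition rneg (n : nat) (s y : 'I_n -> bool) : R := TNhat s y / (1 - phat y).

(* A metric Psi = Phi(TP, v, p); its representation Gamma(r_p, r_n, p) is
   obtained via TP = p r_p, TN = (1-p) r_n and v = 1 - p + TP - TN. *)
Definition Gamma_of (Phi : R -> R -> R -> R) (rp rn p : R) : R :=
  Phi (p * rp) (1 - p + p * rp - (1 - p) * rn) p.

Definition TP_monotonic (Phi : R -> R -> R -> R) : Prop :=
  forall (n1 n2 : nat) (s1 y1 : 'I_n1 -> bool) (s2 y2 : 'I_n2 -> bool),
    0 < phat y1 < 1 -> 0 < phat y2 < 1 ->
    vhat s1 = vhat s2 -> phat y1 = phat y2 ->
    TPhat s1 y1 > TPhat s2 y2 ->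
    Phi (TPhat s1 y1) (vhat s1) (phat y1) > Phi (TPhat s2 y2) (vhat s2) (phat y2).

Definition TPTN_monotonic (Phi : R -> R -> R -> R) : Prop :=
  forall (n1 n2 : nat) (s1 y1 : 'I_n1 -> bool) (s2 y2 : 'I_n2 -> bool),
    0 < phat y1 < 1 -> 0 < phat y2 < 1 ->
    phat y1 = phat y2 ->
    rpos s1 y1 > rpos s2 y2 -> rneg s1 y1 > rneg s2 y2 ->
    Gamma_of Phi (rpos s1 y1) (rneg s1 y1) (phat y1) >
    Gamma_of Phi (rpos s2 y2) (rneg s2 y2) (phat y2).

End Empirical.

(* Main.v *)
Require Import Defs.
From mathcomp Require Import all_boot all_order all_algebra.
From mathcomp Require Import ring lra.
Set Implicit Arguments. Unset Strict Implicit. Unset Printing Implicit Defensive.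
Import Order.TTheory GRing.Theory Num.Theory.
Local Open Scope ring_scope.

Lemma n_pos (R : realFieldType) n (y : 'I_n -> bool) : 0 < phat R y -> (0 < n)%N.
Proof.
case: n y => [|n] y //; rewrite /phat big_ord0 mul0r ltxx //.
Qed.

Lemma TN_id (R : realFieldType) n (s y : 'I_n -> bool) : (0 < n)%N ->
  TNhat R s y = 1 - vhat R s - phat R y + TPhat R s y.
Proof.
move=> hn.
have hn' : (n%:R : R) != 0 by rewrite pnatr_eq0 -lt0n.
have E : \sum_(i < n) ((~~ s i && ~~ y i : bool)%:R : R) =
  n%:R - \sum_(i < n) ((s i : bool)%:R : R) - \sum_(i < n) ((y i : bool)%:R : R)
  + \sum_(i < n) ((s i && y i : bool)%:R : R).
  have -> : (n%:R : R) = \sum_(i < n) (1 : R) by rewrite sumr_const card_ord.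
  rewrite -!sumrB -big_split /=; apply: eq_bigr => i _.
  by case: (s i); case: (y i) => /=; rewrite ?subrr ?subr0 ?sub0r ?addr0 ?add0r ?addNr //; rewrite -?addrA ?subrr ?addr0 ?addNr.
rewrite /TNhat E /vhat /phat /TPhat.
move: (\sum_(i < n) _) (\sum_(i < n) _) (\sum_(i < n) _) hn' => a b c hn'.
move: (n%:R : R) hn' => m hm; by field.
Qed.

Theorem proposition5 (R : realFieldType) (Phi : R -> R -> R -> R) :
  TPTN_monotonic Phi -> TP_monotonic Phi.
Proof.
rewrite /TP_monotonic /TPTN_monotonic => H n1 n2 s1 y1 s2 y2 hp1 hp2 hv hp htp.
have := H n1 n2 s1 y1 s2 y2 hp1 hp2 hp.
case/andP: hp1 => p0 p1.
have hn1 := n_pos p0.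
have hn2 : (0 < n2)%N by case/andP: hp2 => q0 _; exact: (n_pos q0).
have t1 := TN_id R s1 y1 hn1.
have t2 := TN_id R s2 y2 hn2.
have pn : phat R y1 != 0 by rewrite gt_eqF.
have qn : 1 - phat R y1 != 0 by rewrite subr_eq0 eq_sym lt_eqF.
have q0 : 0 < 1 - phat R y1 by rewrite subr_gt0.
rewrite /Gamma_of /rpos /rneg -hp.
have e1 : phat R y1 * (TPhat R s1 y1 / phat R y1) = TPhat R s1 y1 by rewrite mulrC divfK.
have e2 : phat R y1 * (TPhat R s2 y2 / phat R y1) = TPhat R s2 y2 by rewrite mulrC divfK.
have f1 : (1 - phat R y1) * (TNhat R s1 y1 / (1 - phat R y1)) = TNhat R s1 y1 by rewrite mulrC divfK.
have f2 : (1 - phat R y1) * (TNhat R s2 y2 / (1 - phat R y1)) = TNhat R s2 y2 by rewrite mulrC divfK.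
rewrite e1 e2 f1 f2.
have -> : 1 - phat R y1 + TPhat R s1 y1 - TNhat R s1 y1 = vhat R s1 by rewrite t1; move: (phat R y1) (TPhat R s1 y1) (vhat R s1) => a b c; ring.
have -> : 1 - phat R y1 + TPhat R s2 y2 - TNhat R s2 y2 = vhat R s2 by rewrite t2 hp; move: (phat R y2) (TPhat R s2 y2) (vhat R s2) => a b c; ring.
apply.
  by rewrite ltr_pM2r ?invr_gt0.
rewrite ltr_pM2r ?invr_gt0 // t1 t2 hv hp; move: htp; move: (phat R y2) (TPhat R s2 y2) (TPhat R s1 y1) (vhat R s2) => a b c d; lra.
Qed.
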